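(* Let $T$ and $A$ be closed Hermitian subspaces in $X^2$ and $S$ a self-adjoint subspace in $X^2$, with $D(T)=D(S)=:D\subset D(A)$ and $T=S+A$. Then $$A(0)\subset S(0)=T(0),$$ and, with $Q:A(0)^\perp\to S(0)^\perp$ the orthogonal projection, $$T_sx=S_sx+QA_sx\quad\text{for all }x\in D.$$
   Context: $X$ is a complex Hilbert space and $X^2=X\times X$ carries the inner product $\langle (x,f),(y,g)\rangle=\langle x,y\rangle+\langle f,g\rangle$. A subspace $T$ in $X^2$ means a linear subspace of $X^2$ (a linear relation); a linear operator in $X$ is identified with its graph. Notation: $D(T)=\{x:(x,f)\in T \text{ for some } f\}$, $T(x)=\{f:(x,f)\in T\}$. The adjoint is $T^*=\{(y,g)\in X^2:\langle g,x\rangle=\langle y,f\rangle \text{ for all }(x,f)\in T\}$; $T$ is Hermitian if $T\subset T^*$ and self-adjoint if $T=T^*$. For subspaces $S,A$ in $X^2$, $S+A=\{(x,f+g):(x,f)\in S,(x,g)\in A\}$. For a closed subspace $T$, set $T_\infty=\{(0,g)\in X^2:(0,g)\in T\}$ and $T_s=T\ominus T_\infty$ (orthogonal complement of $T_\infty$ in $T$), so $T=T_s\oplus T_\infty$; $T_s$ is the graph of a linear operator (the operator part of $T$) with $D(T_s)=D(T)$ and $R(T_s)\subset T(0)^\perp$. *)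

(* Defs.v *)
(* Complex Hilbert spaces modelled over a scalar field C that is an
   archimedean, Cauchy-complete, algebraically closed numeric field with conjugation
   (this characterises the complex numbers up to isomorphism). *)
From HB Require Import structures.
From mathcomp Require Import all_boot all_order all_algebra.
Set Implicit Arguments. Unset Strict Implicit. Unset Printing Implicit Defensive.
Import Order.TTheory GRing.Theory Num.Theory.
Local Open Scope ring_scope.

Section Hilbert.
Variable C : archiClosedFieldType.

Definition complete_scalars : Prop :=
  forall u : nat -> C,
    (forall e : C, 0 < e -> exists N, forall m n, (N <= m)%N -> (N <= n)%N -> `|u m - u n| < e) ->
    exists l : C, forall e : C, 0 < e -> exists N, forall n, (N <= n)%N -> `|u n - l| < e.

Variable X : lmodType C.

Definition ip_cauchy (ip : X -> X -> C) (u : nat -> X) : Prop :=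
  forall e : C, 0 < e -> exists N, forall m n, (N <= m)%N -> (N <= n)%N ->
    ip (u m - u n) (u m - u n) < e.

Definition ip_converges (ip : X -> X -> C) (u : nat -> X) (l : X) : Prop :=
  forall e : C, 0 < e -> exists N, forall n, (N <= n)%N -> ip (u n - l) (u n - l) < e.

Definition is_hilbert (ip : X -> X -> C) : Prop :=
  [/\ forall (a : C) (x y z : X), ip (a *: x + y) z = a * ip x z + ip y z,
      forall x y : X, ip x y = (ip y x)^*,
      forall x : X, 0 <= ip x x,
      forall x : X, ip x x = 0 -> x = 0
    & forall u : nat -> X, ip_cauchy ip u -> exists l, ip_converges ip u l].

Definition ip2 (ip : X -> X -> C) (p q : X * X) : C := ip p.1 q.1 + ip p.2 q.2.

Definition linrel := X * X -> Prop.

Definition is_subspace (T : linrel) : Prop :=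
  [/\ T (0, 0),
      forall p q, T p -> T q -> T (p.1 + q.1, p.2 + q.2)
    & forall (a : C) p, T p -> T (a *: p.1, a *: p.2)].

Definition is_closed (ip : X -> X -> C) (T : linrel) : Prop :=
  forall (u : nat -> X * X) (l : X * X), (forall n, T (u n)) ->
    (forall e : C, 0 < e -> exists N, forall n, (N <= n)%N ->
        ip2 ip ((u n).1 - l.1, (u n).2 - l.2) ((u n).1 - l.1, (u n).2 - l.2) < e) ->
    T l.

Definition dom (T : linrel) (x : X) : Prop := exists f, T (x, f).
Definition img (T : linrel) (x : X) (f : X) : Prop := T (x, f).   (* f \in T(x) *)

Definition adjoint (ip : X -> X -> C) (T : linrel) : linrel :=
  fun q => forall p, T p -> ip q.2 p.1 = ip q.1 p.2.

Definition is_hermitian (ip : X -> X -> C) (T : linrel) : Prop := forall p, T p -> adjoint ip T p.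
Definition is_selfadjoint (ip : X -> X -> C) (T : linrel) : Prop := forall p, T p <-> adjoint ip T p.

Definition rsum (S A : linrel) : linrel :=
  fun p => exists f g, S (p.1, f) /\ A (p.1, g) /\ p.2 = f + g.

(* T_infinity and T_s = T (-) T_infinity *)
Definition rinf (T : linrel) : linrel := fun p => p.1 = 0 /\ T p.
Definition rs (ip : X -> X -> C) (T : linrel) : linrel :=
  fun p => T p /\ forall q, rinf T q -> ip2 ip p q = 0.

Definition perp (ip : X -> X -> C) (M : X -> Prop) : X -> Prop := fun y => forall m, M m -> ip m y = 0.

Definition is_proj (ip : X -> X -> C) (M : X -> Prop) (h k : X) : Prop :=
  M k /\ forall m, M m -> ip (h - k) m = 0.

End Hilbert.

(* Main.v *)
Require Import Defs.
From HB Require Import structures.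
From mathcomp Require Import all_boot all_order all_algebra.
Import Order.TTheory GRing.Theory Num.Theory.
Local Open Scope ring_scope.
Set Implicit Arguments.

Section Aux.
Variable C : archiClosedFieldType.
Variable X : lmodType C.
Variable ip : X -> X -> C.
Hypothesis HX : is_hilbert ip.

Lemma ipDl x y z : ip (x + y) z = ip x z + ip y z.
Proof. move: HX => [H _ _ _ _]. by have := H 1 x y z; rewrite scale1r mul1r. Qed.

Lemma ip0l z : ip 0 z = 0.
Proof.
have := ipDl 0 0 z; rewrite addr0 => /eqP; rewrite -subr_eq0 opprD addrA subrr.
by rewrite sub0r oppr_eq0 => /eqP.
Qed.

Lemma ipNl x z : ip (- x) z = - ip x z.
Proof.
apply/eqP; rewrite -subr_eq0 opprK -ipDl addrC subrr ip0l //.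
Qed.

Lemma ipsym x y : ip x y = (ip y x)^*.
Proof. by move: HX => [_ H _ _ _]. Qed.

Lemma ip0r z : ip z 0 = 0.
Proof. by rewrite ipsym ip0l rmorph0. Qed.

Lemma ipDr x y z : ip z (x + y) = ip z x + ip z y.
Proof. rewrite ipsym ipDl rmorphD. by rewrite [ip z x]ipsym [ip z y]ipsym. Qed.

Lemma ipNr x z : ip z (- x) = - ip z x.
Proof. rewrite ipsym ipNl rmorphN. by rewrite [ip z x]ipsym. Qed.

Lemma ipsym0 x y : ip x y = 0 -> ip y x = 0.
Proof. by move=> H; rewrite ipsym H rmorph0. Qed.

Lemma sub_add (T : linrel X) : is_subspace T -> forall {x f y g},
  T (x, f) -> T (y, g) -> T (x + y, f + g).
Proof. by case=> _ H _ x f y g Hf Hg; apply: (H (x, f) (y, g)). Qed.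

Lemma sub_opp (T : linrel X) : is_subspace T -> forall {x f},
  T (x, f) -> T (- x, - f).
Proof.
case=> _ _ H x f Hf; have := H (-1) (x, f) Hf; by rewrite /= !scaleN1r.
Qed.

Lemma sub_sub (T : linrel X) : is_subspace T -> forall {x f y g},
  T (x, f) -> T (y, g) -> T (x - y, f - g).
Proof. by move=> HT x f y g Hf Hg; apply: sub_add => //; apply: sub_opp. Qed.

End Aux.

Theorem theorem3p2 (C : archiClosedFieldType) (HC : complete_scalars C)
  (X : lmodType C) (ip : X -> X -> C) (HX : is_hilbert ip)
  (T S A : linrel X)
  (HTsub : is_subspace T) (HAsub : is_subspace A) (HSsub : is_subspace S)
  (HTcl : is_closed ip T) (HAcl : is_closed ip A)
  (HTh : is_hermitian ip T) (HAh : is_hermitian ip A) (HSsa : is_selfadjoint ip S)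
  (HDTS : forall x, dom T x <-> dom S x)
  (HDA : forall x, dom S x -> dom A x)
  (HTSA : forall p, T p <-> rsum S A p) :
  (forall g, img A 0 g -> img S 0 g) /\
  (forall g, img S 0 g <-> img T 0 g) /\
  (forall x, dom T x -> forall f g h k : X,
     rs ip T (x, f) -> rs ip S (x, g) -> rs ip A (x, h) ->
     is_proj ip (perp ip (img S 0)) h k ->
     f = g + k).
Proof.
have ipDl := ipDl HX; have ipDr := ipDr HX; have ipNr := ipNr HX.
have ip0l := ip0l HX; have ip0r := ip0r HX.
have S00 : S (0, 0) by case: HSsub.
have A00 : A (0, 0) by case: HAsub.
have P1 : forall g, img A 0 g -> img S 0 g.
  move=> g Ag; rewrite /img.
  have Tg : T (0, g).
    apply/HTSA; exists 0, g; split => //; split => //=; by rewrite add0r.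
  apply/HSsa => -[x f] /= Sxf.
  have [f' Tf'] : dom T x by apply/HDTS; exists f.
  have /= -> := HTh _ Tg (x, f') Tf'.
  by rewrite !ip0l.
have P2 : forall g, img S 0 g <-> img T 0 g.
  move=> g; split => Hg.
    apply/HTSA; exists g, 0; split => //; split => //=; by rewrite addr0.
  move/HTSA: Hg => [f1 [g1 [/= Sf [/= Ag /= ->]]]].
  have := sub_add HSsub Sf (P1 _ Ag); by rewrite addr0.
split => //; split => //.
move=> x _ f g h k [Tf Of] [Sg Og] [Ah _] [Pk Ok].
move/HTSA: Tf => [g1 [h1 [Sg1 [Ah1 /= Hf]]]].
set s0 := (g1 - g) + (h1 - h).
have Ss0 : img S 0 s0.
  rewrite /img -[0 : X](addr0 0); apply: sub_add => //.
    by rewrite -(subrr x); apply: sub_sub.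
  apply: P1; rewrite /img -(subrr x); by apply: sub_sub.
set w := f - g - k.
have Hw : w = (h - k) + s0.
  rewrite /w /s0 Hf.
  rewrite (addrC h1) addrA -(addrA h) addrA (addrAC h) subrr add0r.
  by rewrite (addrC (-k)) [RHS]addrAC [in RHS](addrAC g1).
have wperp : perp ip (img S 0) w.
  move=> m Sm; rewrite /w !ipDr !ipNr.
  have -> : ip m f = 0.
    apply: (ipsym0 HX); have := Of (0, m) (conj erefl (proj1 (P2 m) Sm)).
    by rewrite /ip2 /= ip0r add0r.
  have -> : ip m g = 0.
    apply: (ipsym0 HX); have := Og (0, m) (conj erefl Sm).
    by rewrite /ip2 /= ip0r add0r.
  by rewrite (Pk m Sm) !oppr0 !addr0.
have ww : ip w w = 0.
  rewrite {1}Hw ipDl Ok // add0r; exact: wperp.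
have w0 : w = 0 by move: HX => [_ _ _ H _]; apply: H.
move/eqP: w0; rewrite /w subr_eq0 subr_eq => /eqP ->; by rewrite addrC.
Qed.
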